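(* Let $Q\in\mathbb{N}$ be the denominator $q_\ell$ of a convergent of an irrational number, and let $x_j=\frac{j+\varepsilon_j}{Q}$ for $0\le j\le Q-1$, where $0<\varepsilon_j<1$. Then $$\sum_{j=0}^{Q-1}\log(x_j)-Q\int_0^1\log(x)\,dx=\sum_{j=1}^{Q-1}\frac{\varepsilon_j-1/2}{j}+\log(\varepsilon_0)+O(1),$$ with an absolute implied constant independent of the $\varepsilon_j$ and of $Q$. *)

(* Defs.v *)
From Stdlib Require Import Reals ZArith.
From Coquelicot Require Import Coquelicot.
Open Scope R_scope.

Definition irrational (alpha : R) : Prop :=
  ~ exists (p : Z) (q : Z), q <> 0%Z /\ alpha = IZR p / IZR q.

(* floor, via Stdlib's Int_part (= up x - 1 = floor x) *)
Definition floorR (x : R) : Z := Int_part x.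

Fixpoint cf_rem (alpha : R) (n : nat) : R :=
  match n with
  | O => alpha
  | S n => / (cf_rem alpha n - IZR (floorR (cf_rem alpha n)))
  end.

Definition cf_a (alpha : R) (n : nat) : Z := floorR (cf_rem alpha n).

(* (q_{n-1}, q_n) with q_{-1} = 0, q_0 = 1, q_{n+1} = a_{n+1} q_n + q_{n-1} *)
Fixpoint cf_qpair (alpha : R) (n : nat) : Z * Z :=
  match n with
  | O => (0%Z, 1%Z)
  | S n => let (qm, q) := cf_qpair alpha n in
           (q, (cf_a alpha (S n) * q + qm)%Z)
  end.

Definition cf_denom (alpha : R) (n : nat) : Z := snd (cf_qpair alpha n).

(* Main.v *)
Require Import Defs.
From Stdlib Require Import Reals ZArith.
From Coquelicot Require Import Coquelicot.
From Stdlib Require Import Lra Psatz.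
Open Scope R_scope.


Lemma ln_lower u : 0 <= u -> u - u^2/2 <= ln (1+u).
Proof.
intros Hu. destruct (Req_dec u 0) as [->|Hu0].
{ replace (1+0) with 1 by ring. rewrite ln_1. lra. }
destruct (MVT_cor2 (fun v => ln (1+v) - v + v^2/2) (fun v => 1/(1+v) - 1 + v) 0 u) as [c [Hc1 Hc2]].
- lra.
- intros c Hc. apply is_derive_Reals. auto_derive. lra. field. lra.
- replace (1+0) with 1 in Hc1 by ring. rewrite ln_1 in Hc1.
  assert (H: 0 <= (1/(1+c) - 1 + c) * (u - 0)).
  { apply Rmult_le_pos; [|lra].
    replace (1/(1+c) - 1 + c) with (c^2/(1+c)) by (field; lra).
    apply Rdiv_le_0_compat; nra. }
  lra.
Qed.

Lemma ln_upper u : 0 <= u -> ln (1+u) <= u - u^2/2 + u^3/3.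
Proof.
intros Hu. destruct (Req_dec u 0) as [->|Hu0].
{ replace (1+0) with 1 by ring. rewrite ln_1. lra. }
destruct (MVT_cor2 (fun v => v - v^2/2 + v^3/3 - ln (1+v)) (fun v => 1 - v + v^2 - 1/(1+v)) 0 u) as [c [Hc1 Hc2]].
- lra.
- intros c Hc. apply is_derive_Reals. auto_derive. lra. field. lra.
- replace (1+0) with 1 in Hc1 by ring. rewrite ln_1 in Hc1.
  assert (H: 0 <= (1 - c + c^2 - 1/(1+c)) * (u - 0)).
  { apply Rmult_le_pos; [|lra].
    replace (1 - c + c^2 - 1/(1+c)) with (c^3/(1+c)) by (field; lra).
    apply Rdiv_le_0_compat; nra. }
  lra.
Qed.

Lemma term_bound x e : 1 <= x -> 0 < e < 1 ->
  Rabs (ln (x + e) - (e - 1/2)/x - ((x+1) * ln (x+1) - x * ln x - 1)) <= 1 / x^2.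
Proof.
intros Hx He.
set (t := e/x). set (u := 1/x).
assert (Hxu : x * u = 1) by (unfold u; field; lra).
assert (Ht : e = x * t) by (unfold t; field; lra).
assert (Hu0 : 0 < u) by (unfold u; apply Rdiv_lt_0_compat; lra).
assert (Hu1 : u <= 1) by nra.
assert (Ht0 : 0 < t) by (unfold t; apply Rdiv_lt_0_compat; lra).
assert (Htu : t <= u) by (unfold t, u; apply Rmult_le_compat_r; [left; apply Rinv_0_lt_compat; lra | lra]).
assert (E1 : ln (x+e) = ln x + ln (1+t)).
{ rewrite <- ln_mult; [|lra|lra].
  f_equal. unfold t; field; lra. }
assert (E2 : ln (x+1) = ln x + ln (1+u)).
{ rewrite <- ln_mult by (try lra). f_equal. unfold u; field; lra. }
assert (E3 : (e - 1/2)/x = t - u/2) by (unfold t, u; field; lra).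
assert (E4 : 1/x^2 = u^2) by (unfold u; field; lra).
rewrite E1, E2, E3, E4.
pose proof (ln_lower t (Rlt_le _ _ Ht0)). pose proof (ln_upper t (Rlt_le _ _ Ht0)).
pose proof (ln_lower u (Rlt_le _ _ Hu0)). pose proof (ln_upper u (Rlt_le _ _ Hu0)).
set (lt := ln (1+t)) in *. set (lu := ln (1+u)) in *. set (lx := ln x).
assert (P1 : x * (u - u^2/2) <= x * lu) by (apply Rmult_le_compat_l; lra).
assert (P2 : x * lu <= x * (u - u^2/2 + u^3/3)) by (apply Rmult_le_compat_l; lra).
replace (x * (u - u^2/2)) with (1 - u/2) in P1 by (field_simplify; nra).
replace (x * (u - u^2/2 + u^3/3)) with (1 - u/2 + u^2/3) in P2 by nra.
assert (t^2 <= u^2) by nra. assert (t^3 <= t^2) by nra. assert (u^3 <= u^2) by nra.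
apply Rabs_le. split; nra.
Qed.
Lemma aux_ineq x : 1 <= x -> 2 - 2/x + 1/x^2 <= 2 - 2/(x+1).
Proof.
intros Hx.
assert (2/x - 2/(x+1) - 1/x^2 = (x-1)/(x^2*(x+1))) by (field; lra).
assert (0 <= (x-1)/(x^2*(x+1))) by (apply Rdiv_le_0_compat; nra).
lra.
Qed.

Lemma plus_R (a b : R) : plus a b = a + b.
Proof. reflexivity. Qed.

Lemma main_sum (Q : nat) (eps : nat -> R) : (1 <= Q)%nat -> forall n,
  (forall j, (1 <= j <= n)%nat -> 0 < eps j < 1) ->
  Rabs (sum_n_m (fun j => ln ((INR j + eps j)/INR Q)) 1 n
        - sum_n_m (fun j => (eps j - 1/2)/INR j) 1 n
        - ((INR n + 1) * ln (INR n + 1) - INR n - INR n * ln (INR Q))) <= 2 - 2/(INR n + 1).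
Proof.
intros HQ n. induction n as [|n IH]; intros He.
- rewrite !sum_n_m_zero by lia. simpl. replace (0+1) with 1 by ring. rewrite ln_1.
  unfold zero; simpl. rewrite Rabs_R0 || (replace (0 - 0 - (1*0 - 0 - 0*ln (INR Q))) with 0 by ring; rewrite Rabs_R0). lra.
- rewrite !sum_n_Sm by lia. rewrite !plus_R.
  assert (HQ' : 0 < INR Q) by (apply lt_0_INR; lia).
  specialize (IH (fun j Hj => He j ltac:(lia))).
  pose proof (He (S n) ltac:(lia)) as Hn.
  rewrite S_INR in *.
  set (x := INR n + 1) in *.
  assert (Hx : 1 <= x) by (unfold x; pose proof (pos_INR n); lra).
  rewrite ln_div by lra.
  pose proof (term_bound x (eps (S n)) Hx Hn) as T.
  pose proof (aux_ineq x Hx).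
  set (A := sum_n_m (fun j => ln ((INR j + eps j)/INR Q)) 1 n) in *.
  set (B := sum_n_m (fun j => (eps j - 1/2)/INR j) 1 n) in *.
  set (d := ln (x + eps (S n)) - (eps (S n) - 1/2)/x - ((x+1) * ln (x+1) - x * ln x - 1)) in T.
  match goal with |- Rabs ?E <= _ =>
    replace E with ((A - B - (x * ln x - INR n - INR n * ln (INR Q))) + d) by (unfold d, x; change (plus B ?y) with (B + y); ring) end.
  eapply Rle_trans; [apply Rabs_triang|]. lra.
Qed.

Lemma ln_le_xm1 y : 0 < y -> ln y <= y - 1.
Proof. intros Hy. pose proof (exp_ineq1_le (ln y)). rewrite exp_ln in H by lra. lra. Qed.

Lemma xlnx_bound a : 0 < a < 1 -> 0 <= - (a * ln a) <= 2 * sqrt a.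
Proof.
intros Ha. set (s := sqrt a).
assert (Hs0 : 0 < s) by (apply sqrt_lt_R0; lra).
assert (Hss : s * s = a) by (apply sqrt_sqrt; lra).
assert (Hs1 : s < 1) by nra.
assert (E : ln a = ln s + ln s) by (rewrite <- Hss; apply ln_mult; lra).
assert (E2 : ln s + ln (/ s) = 0) by (rewrite <- ln_mult by (try apply Rinv_0_lt_compat; lra); rewrite Rinv_r by lra; apply ln_1).
pose proof (ln_le_xm1 s Hs0). pose proof (ln_le_xm1 (/s) (Rinv_0_lt_compat _ Hs0)).
assert (s * /s = 1) by (field; lra).
rewrite E. nra.
Qed.

Lemma RInt_ln : RInt_gen ln (at_right 0) (at_point 1) = -1.
Proof.
apply is_RInt_gen_unique.
intros P [eps HP].
set (G := fun x => x * ln x - x).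
assert (Hd : 0 < Rmin 1 (Rmin (eps/2) ((eps/4)^2))).
{ pose proof (cond_pos eps). repeat apply Rmin_pos; try lra. apply pow_lt; lra. }
set (delta := mkposreal _ Hd).
unfold filtermapi.
apply Filter_prod with (fun a => 0 < a < delta) (fun b => b = 1).
- unfold at_right, within, locally. exists delta. intros y Hy Hy0. change (Rabs (y - 0) < delta) in Hy.
  rewrite Rminus_0_r, Rabs_pos_eq in Hy by lra. lra.
- reflexivity.
- intros a b Ha ->. unfold delta in Ha; cbn [pos] in Ha.
  pose proof (Rmin_l 1 (Rmin (eps/2) ((eps/4)^2))).
  assert (Ha1 : a < 1) by lra.
  exists (G 1 - G a). split.
  + cbn [fst snd]. change (G 1 - G a) with (minus (G 1) (G a)).
    apply (is_RInt_derive (V:=R_CompleteNormedModule) G ln).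
    * intros x Hx. rewrite Rmin_left, Rmax_right in Hx by lra.
      unfold G. auto_derive. lra. field. lra.
    * intros x Hx. rewrite Rmin_left in Hx by lra. apply continuous_ln. lra.
  + apply HP. change (Rabs ((G 1 - G a) - -1) < eps).
    pose proof (Rmin_r 1 (Rmin (eps/2) ((eps/4)^2))).
    pose proof (Rmin_l (eps/2) ((eps/4)^2)).
    pose proof (Rmin_r (eps/2) ((eps/4)^2)).
    pose proof (cond_pos eps).
    pose proof (xlnx_bound a ltac:(lra)).
    assert (sqrt a * sqrt a = a) by (apply sqrt_sqrt; lra).
    assert (0 <= sqrt a) by (apply sqrt_pos).
    assert (sqrt a < eps/4) by nra.
    unfold G. rewrite ln_1.
    rewrite Rabs_pos_eq; lra.
Qed.

Lemma irr_step r k : irrational r -> irrational (/ (r - IZR k)).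
Proof.
intros Hr [p [q [Hq E]]].
assert (Hd : r - IZR k <> 0).
{ intro H. apply Hr. exists k, 1%Z. split; [lia|]. replace (IZR 1) with 1 by reflexivity. lra. }
assert (Hp : p <> 0%Z).
{ intro Hp0. subst p. replace (IZR 0) with 0 in E by reflexivity.
  unfold Rdiv in E. rewrite Rmult_0_l in E. apply (Rinv_neq_0_compat _ Hd). exact E. }
apply Hr. exists (k*p + q)%Z, p. split; [exact Hp|].
assert (Hpr : IZR p <> 0) by (apply not_0_IZR; exact Hp).
assert (Hqr : IZR q <> 0) by (apply not_0_IZR; exact Hq).
assert (E2 : r - IZR k = IZR q / IZR p).
{ rewrite <- (Rinv_inv (r - IZR k)), E. field. split; assumption. }
rewrite plus_IZR, mult_IZR. apply (f_equal (fun z => z + IZR k)) in E2.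
replace (r - IZR k + IZR k) with r in E2 by ring. rewrite E2. field. exact Hpr.
Qed.

Lemma irr_rem alpha n : irrational alpha -> irrational (cf_rem alpha n).
Proof. intros H. induction n as [|n IH]; simpl; [exact H|]. apply irr_step, IH. Qed.

Lemma a_pos alpha n : irrational alpha -> (1 <= cf_a alpha (S n))%Z.
Proof.
intros H. unfold cf_a. simpl. unfold floorR.
pose proof (irr_rem alpha n H) as Hr.
set (r := cf_rem alpha n) in *.
destruct (base_Int_part r) as [B1 B2].
assert (Hne : r <> IZR (Int_part r)).
{ intro E. apply Hr. exists (Int_part r), 1%Z. split; [lia|]. replace (IZR 1) with 1 by reflexivity. lra. }
set (d := r - IZR (Int_part r)).
assert (Hd : 0 < d < 1) by (unfold d; lra).
set (y := / d).
assert (0 < y) by (apply Rinv_0_lt_compat; lra). assert (d * y = 1) by (unfold y; field; lra). assert (Hy : 1 < y) by nra.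
destruct (base_Int_part y) as [C1 C2].
assert (HI : 0 < IZR (Int_part y)) by lra.
apply lt_IZR in HI. lia.
Qed.

Lemma qpair_pos alpha n : irrational alpha ->
  (0 <= fst (cf_qpair alpha n) /\ 1 <= snd (cf_qpair alpha n))%Z.
Proof.
intros H. induction n as [|n IH]; simpl; [lia|].
destruct (cf_qpair alpha n) as [qm q]. simpl in *.
pose proof (a_pos alpha n H). nia.
Qed.

Theorem proposition4p1 :
  exists C : R, forall (alpha : R), irrational alpha ->
  forall (l : nat) (eps : nat -> R),
    let Q : nat := Z.to_nat (cf_denom alpha l) in
    (forall j : nat, (j < Q)%nat -> 0 < eps j < 1) ->
    Rabs ( (sum_n_m (fun j => ln ((INR j + eps j) / INR Q)) 0 (Q - 1)
            - INR Q * RInt_gen ln (at_right 0) (at_point 1))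
         - (sum_n_m (fun j => (eps j - 1 / 2) / INR j) 1 (Q - 1) + ln (eps 0%nat)) )
    <= C.
Proof.
exists 3. intros alpha Hirr l eps Q He.
assert (HQ : (1 <= Q)%nat).
{ unfold Q, cf_denom. pose proof (qpair_pos alpha l Hirr). lia. }
rewrite RInt_ln.
rewrite sum_Sn_m by lia. rewrite plus_R.
replace (INR 0) with 0 by reflexivity.
assert (HQr : 0 < INR Q) by (apply lt_0_INR; lia).
pose proof (He 0%nat ltac:(lia)) as He0.
rewrite Rplus_0_l, ln_div by lra.
set (m := (Q - 1)%nat) in *.
assert (Hm : INR m + 1 = INR Q) by (rewrite <- S_INR; f_equal; unfold m; lia).
pose proof (main_sum Q eps HQ m (fun j Hj => He j ltac:(unfold m in Hj; lia))) as M.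
rewrite Hm in M.
assert (0 < 2 / INR Q) by (apply Rdiv_lt_0_compat; lra).
set (A := sum_n_m (fun j => ln ((INR j + eps j)/INR Q)) (S 0) m) in *.
set (B := sum_n_m (fun j => (eps j - 1/2)/INR j) 1 m) in *.
replace (INR m) with (INR Q - 1) in M by lra.
match goal with |- Rabs ?E <= _ =>
  replace E with ((A - B - (INR Q * ln (INR Q) - (INR Q - 1) - (INR Q - 1) * ln (INR Q))) + 1) by ring end.
eapply Rle_trans; [apply Rabs_triang|]. rewrite Rabs_R1. lra.
Qed.
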